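(* Let $d\ge1$ and $\Box^d\subset\mathbb R^d$ be the $d$-cube. For $1\le i\le d$ let $a_i$ be the facet $\{x\in\Box^d:x_i=1\}$ and $a_{-i}$ the facet $\{x\in\Box^d:x_i=-1\}$. Then the face monoid of $\Box^d$ has a presentation with generators $a_{\pm1},\dots,a_{\pm d}$ and relations $a_i^2=a_i$ for all $i$; $a_ia_j=a_ja_i$ for all $i,j\in\{\pm1,\dots,\pm d\}$; and $a_ia_{-i}=a_ia_{-i}a_j$ for all $i\in\{1,\dots,d\}$ and all $j\in\{\pm1,\dots,\pm d\}$.
   Context: $\Box^d$ is the convex hull of $\{\sum_i\varepsilon_iv_i:\varepsilon_i=\pm1\}$ where $v_1,\dots,v_d$ is the standard basis. The face monoid of a polytope is the set of its faces (including the polytope itself and $\varnothing$) under intersection. *)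

(* Defs.v *)
From HB Require Import structures.
From mathcomp Require Import all_boot all_order all_algebra.
From mathcomp Require Import classical_sets reals.
Unset Printing Implicit Defensive.
Import Order.TTheory GRing.Theory Num.Theory.
Local Open Scope ring_scope.
Local Open Scope classical_set_scope.

Definition cube (R : realType) (d : nat) : set ('I_d -> R) :=
  [set x | exists lam : {ffun 'I_d -> bool} -> R,
     (forall e, 0 <= lam e) /\ \sum_(e : {ffun 'I_d -> bool}) lam e = 1 /\
     forall i, x i = \sum_(e : {ffun 'I_d -> bool}) lam e * (if e i then 1 else -1)].

(* Faces of a polytope P: intersections of P with a supporting hyperplane
   {c.x = b} where c.x <= b on P; c = 0, b = 0 gives P, c = 0, b = 1 gives the
   empty face. *)
Definition is_face (R : realType) (d : nat) (P F : set ('I_d -> R)) : Prop :=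
  exists (c : 'I_d -> R) (b : R),
    (forall x, P x -> \sum_i c i * x i <= b) /\
    F = [set x | P x /\ \sum_i c i * x i = b].

(* Generators a_{+-i}: (i, true) is a_{i+1}, (i, false) is a_{-(i+1)}. *)
Definition gen (d : nat) := ('I_d * bool)%type.

Definition facet (R : realType) (d : nat) (g : gen d) : set ('I_d -> R) :=
  [set x | cube R d x /\ x g.1 = (if g.2 then 1 else -1)].

(* The monoid homomorphism from the free monoid (words) to the face monoid
   (faces under intersection, identity the cube itself). *)
Definition word_face (R : realType) (d : nat) (w : seq (gen d)) : set ('I_d -> R) :=
  foldr (fun g F => facet R d g `&` F) (cube R d) w.

Inductive cube_rel (d : nat) : seq (gen d) -> seq (gen d) -> Prop :=
| rel_idem (g : gen d) : cube_rel d [:: g; g] [:: g]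
| rel_comm (g h : gen d) : cube_rel d [:: g; h] [:: h; g]
| rel_opp (i : 'I_d) (h : gen d) :
    cube_rel d [:: (i, true); (i, false)] [:: (i, true); (i, false); h].

Inductive word_cong (T : Type) (rel : seq T -> seq T -> Prop) : seq T -> seq T -> Prop :=
| wc_refl w : word_cong T rel w w
| wc_sym w1 w2 : word_cong T rel w1 w2 -> word_cong T rel w2 w1
| wc_trans w1 w2 w3 : word_cong T rel w1 w2 -> word_cong T rel w2 w3 -> word_cong T rel w1 w3
| wc_step u l r v : rel l r -> word_cong T rel (u ++ l ++ v) (u ++ r ++ v).

(* Main.v *)
Require Import Defs.
From mathcomp Require Import all_boot all_order all_algebra.
From mathcomp Require Import classical_sets boolp reals.
From mathcomp Require Import lra.
Import Order.TTheory GRing.Theory Num.Theory.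

Set Implicit Arguments.
Section Cong.
Variable d : nat.
Notation cg := (word_cong (gen d) (cube_rel d)).

Lemma cg_ctx u v w1 w2 : cg w1 w2 -> cg (u ++ w1 ++ v) (u ++ w2 ++ v).
Proof.
elim=> [w|a b _ IH|a b c _ IH1 _ IH2|u' l r v' H].
- exact: wc_refl.
- exact: wc_sym.
- exact: wc_trans IH2.
- rewrite !catA -!(catA (u ++ u')) -!catA.
  have := wc_step _ _ (u ++ u') l r (v' ++ v) H.
  by rewrite -!catA.
Qed.

Lemma cgT w1 w2 w3 : cg w1 w2 -> cg w2 w3 -> cg w1 w3.
Proof. exact: wc_trans. Qed.
Lemma cgS w1 w2 : cg w1 w2 -> cg w2 w1.
Proof. exact: wc_sym. Qed.

Lemma cg_pre u w1 w2 : cg w1 w2 -> cg (u ++ w1) (u ++ w2).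
Proof. by move=> H; have := cg_ctx u [::] H; rewrite !cats0. Qed.

Lemma cg_suf v w1 w2 : cg w1 w2 -> cg (w1 ++ v) (w2 ++ v).
Proof. by move=> H; have := cg_ctx [::] v H. Qed.

Lemma cg_comm g h w : cg (g :: h :: w) (h :: g :: w).
Proof. exact: (wc_step _ _ [::] _ _ w (rel_comm d g h)). Qed.

Lemma cg_idem g w : cg (g :: g :: w) (g :: w).
Proof. exact: (wc_step _ _ [::] _ _ w (rel_idem d g)). Qed.

Lemma cg_mem g w : g \in w -> cg (g :: w) w.
Proof.
elim: w => // h w IH; rewrite in_cons => /orP[/eqP->|Hg].
  exact: cg_idem.
apply: cgT (cg_comm _ _ _) _.
exact: (cg_pre [:: h] (IH Hg)).
Qed.

Lemma cg_sub w1 w2 : {subset w1 <= w2} -> cg (w1 ++ w2) w2.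
Proof.
elim: w1 => [|g w1 IH] Hs /=; first exact: wc_refl.
apply: (cgT (@cg_mem g (w1 ++ w2) _)).
  by rewrite mem_cat Hs ?orbT // mem_head.
by apply: IH => x Hx; apply: Hs; rewrite in_cons Hx orbT.
Qed.

Lemma cg_rot g v : cg (g :: v) (v ++ [:: g]).
Proof.
elim: v => [|h v IH] /=; first exact: wc_refl.
apply: cgT (cg_comm _ _ _) _.
exact: (cg_pre [:: h] IH).
Qed.

Lemma cg_catC u v : cg (u ++ v) (v ++ u).
Proof.
elim: u => [|g u IH] /=; first by rewrite cats0; exact: wc_refl.
apply: cgT (cg_pre [:: g] IH) _ => /=.
have := cg_suf u (cg_rot g v).
by rewrite -catA.
Qed.

Lemma cg_sameset w1 w2 : {subset w1 <= w2} -> {subset w2 <= w1} -> cg w1 w2.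
Proof.
move=> H12 H21.
apply: cgT (cgS (cg_sub H21)) _.
apply: cgT (cg_catC _ _) _.
exact: cg_sub.
Qed.

Definition zw (i : 'I_d) : seq (gen d) := [:: (i, true); (i, false)].

Lemma cg_zabs i v : cg (zw i ++ v) (zw i).
Proof.
elim: v => [|h v IH]; first by rewrite cats0; exact: wc_refl.
apply: cgT _ IH.
apply: cgS.
have := wc_step _ _ [::] _ _ v (rel_opp d i h).
by rewrite /zw /=.
Qed.

Lemma cg_confl i w : (i, true) \in w -> (i, false) \in w -> cg w (zw i).
Proof.
move=> Ht Hf.
apply: cgT (cgS (cg_sub (w1 := zw i) _)) _.
  by move=> x; rewrite !in_cons in_nil orbF => /orP[]/eqP->.
exact: cg_zabs.
Qed.

Lemma cg_zz i j : cg (zw i) (zw j).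
Proof.
apply: cgT (cgS (cg_zabs i (zw j))) _.
apply: cgT (cg_catC _ _) _.
exact: cg_zabs.
Qed.

End Cong.

Section Geo.
Variable R : realType.
Variable d : nat.
Local Open Scope ring_scope.
Local Open Scope classical_set_scope.
Notation cg := (word_cong (gen d) (cube_rel d)).

Definition sgn (b : bool) : R := if b then 1 else -1.
Definition Pw (w : seq (gen d)) (x : 'I_d -> R) : Prop :=
  forall g, g \in w -> x g.1 = sgn g.2.

Lemma word_faceE w : word_face R d w = [set x | cube R d x /\ Pw w x].
Proof.
elim: w => [|g w IH] /=.
  apply/seteqP; split=> x /=; last by case.
  by move=> Hx; split=> // g; rewrite in_nil.
rewrite IH; apply/seteqP; split => x /=.
  case=> [[Hc Hg] [_ Hw]]; split=> // h; rewrite in_cons => /orP[/eqP->|]; auto.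
case=> Hc Hw; split; first by split=> //; apply: Hw; exact: mem_head.
by split=> // h Hh; apply: Hw; rewrite in_cons Hh orbT.
Qed.

Lemma Pw_cat u v x : Pw (u ++ v) x <-> Pw u x /\ Pw v x.
Proof.
split.
  by move=> H; split=> g Hg; apply: H; rewrite mem_cat Hg ?orbT.
by case=> Hu Hv g; rewrite mem_cat => /orP[]; [apply: Hu|apply: Hv].
Qed.

Lemma Pw_eqmem l r x : l =i r -> (Pw l x <-> Pw r x).
Proof. by move=> E; split=> H g Hg; apply: H; rewrite ?E // -E. Qed.

Lemma Pw_rel l r x : cube_rel d l r -> (Pw l x <-> Pw r x).
Proof.
case=> [g|g h|i h].
- by apply: Pw_eqmem => z; rewrite !inE orbb.
- by apply: Pw_eqmem => z; rewrite !inE orbC.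
- have K : forall w, (i, true) \in w -> (i, false) \in w -> ~ Pw w x.
    move=> w Ht Hf H; have := H _ Ht; have := H _ Hf; rewrite /sgn /= => -> h1.
    by move: h1; lra.
  split=> H; exfalso; apply: (K _ _ _ H); by rewrite !inE eqxx ?orbT.
Qed.

Lemma cong_Pw w1 w2 : cg w1 w2 -> forall x, Pw w1 x <-> Pw w2 x.
Proof.
elim=> [w|a b _ IH|a b c _ IH1 _ IH2|u l r v H] x.
- by [].
- by split=> H; apply/(IH x).
- by split=> H; [apply/(IH2 x)/(IH1 x) | apply/(IH1 x)/(IH2 x)].
- rewrite !Pw_cat (Pw_rel x H); tauto.
Qed.

Lemma word_face_cong w1 w2 : cg w1 w2 -> word_face R d w1 = word_face R d w2.
Proof.
move=> H; rewrite !word_faceE; apply/seteqP; split => x /= [Hc HP]; split => //.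
  by apply/(cong_Pw H).
by apply/(cong_Pw H).
Qed.

Definition vert (e : {ffun 'I_d -> bool}) : 'I_d -> R := fun i => sgn (e i).

Lemma vert_cube e : cube R d (vert e).
Proof.
exists (fun e' => (e' == e)%:R); split; first by move=> e'; rewrite ler0n.
split.
  by rewrite (bigD1 e) //= big1 ?addr0 ?eqxx // => e' /negbTE ->.
move=> i; rewrite (bigD1 e) //= big1 ?addr0 ?eqxx ?mul1r // => e' /negbTE ->.
by rewrite mul0r.
Qed.

Lemma cube_bound x : cube R d x -> forall i, `|x i| <= 1.
Proof.
case=> lam [H0 [H1 Hx]] i; rewrite ler_norml Hx; apply/andP; split.
  have A : (-1 : R) = \sum_e - lam e by rewrite sumrN H1.
  rewrite [X in X <= _]A; apply: ler_sum => e _; have := H0 e; case: (e i); rewrite ?mulr1 ?mulrN1; lra.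
have B : (1 : R) = \sum_e lam e by rewrite H1.
rewrite [X in _ <= X]B; apply: ler_sum => e _; have := H0 e; case: (e i); rewrite ?mulr1 ?mulrN1; lra.
Qed.

Lemma term_eq (c y : R) : `|y| <= 1 ->
  (c * y = `|c| <-> ((0 < c -> y = 1) /\ (c < 0 -> y = -1))).
Proof.
rewrite ler_norml => /andP[Hl Hu].
case: (ltrgtP c 0) => Hc.
- rewrite ltr0_norm //; split => [H|[_ H]]; last by rewrite H; lra.
  by split=> h; [exfalso; move: h; lra | nra].
- rewrite gtr0_norm //; split => [H|[H _]]; last by rewrite H ?mulr1.
  by split=> h; [nra | exfalso; move: h; lra].
- by rewrite Hc normr0 mul0r; split=> // _.
Qed.

Lemma sum_bound (c x : 'I_d -> R) : (forall i, `|x i| <= 1) ->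
  \sum_i c i * x i <= \sum_i `|c i|.
Proof.
move=> Hx; apply: ler_sum => i _; apply: le_trans (ler_norm _) _.
rewrite normrM; have := Hx i; have := normr_ge0 (c i); have := normr_ge0 (x i); nra.
Qed.

Lemma sum_eq (c x : 'I_d -> R) : (forall i, `|x i| <= 1) ->
  (\sum_i c i * x i = \sum_i `|c i| <-> forall i, c i * x i = `|c i|).
Proof.
move=> Hx; split; last by move=> H; apply: eq_bigr => i _; exact: H.
move=> H i.
have H0 : \sum_i (`|c i| - c i * x i) = 0 by rewrite sumrB H subrr.
have Hn : forall j, xpredT j -> 0 <= `|c j| - c j * x j.
  move=> j _; rewrite subr_ge0; apply: le_trans (ler_norm _) _.
  rewrite normrM; have := Hx j; have := normr_ge0 (c j); have := normr_ge0 (x j); nra.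
have := @psumr_eq0P _ _ xpredT (fun j => `|c j| - c j * x j) Hn H0 i isT.
by move/eqP; rewrite subr_eq0 => /eqP ->.
Qed.

Definition confl (w : seq (gen d)) := exists i, (i, true) \in w /\ (i, false) \in w.

Lemma confl_empty w : confl w -> word_face R d w = set0.
Proof.
move=> [i [Ht Hf]]; rewrite word_faceE; apply/seteqP; split=> x //= [_ H].
have := H _ Ht; have := H _ Hf; rewrite /sgn /= => -> h1.
by move: h1; lra.
Qed.

Lemma vert_in (w : seq (gen d)) (e : {ffun 'I_d -> bool}) : (forall h, h \in w -> e h.1 = h.2) -> word_face R d w (vert e).
Proof.
move=> H; rewrite word_faceE; split; first exact: vert_cube.
by move=> h /H; rewrite /vert => ->.
Qed.

Lemma nconfl_nonempty w : ~ confl w -> exists x, word_face R d w x.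
Proof.
move=> Hn; exists (vert [ffun j => (j, true) \in w]); apply: vert_in => [[j b]] Hh /=.
rewrite ffunE; case: b Hh => Hh //.
case E: ((j, true) \in w) => //; exfalso; apply: Hn; by exists j.
Qed.

Lemma nconfl_vertex w g : ~ confl w -> g \notin w ->
  exists x, word_face R d w x /\ ~ (x g.1 = sgn g.2).
Proof.
case: g => j0 b0 Hn Hg.
exists (vert [ffun j => if j == j0 then ~~ b0 else (j, true) \in w]); split.
  apply: vert_in => [[j b]] Hh /=; rewrite ffunE.
  case: eqP => [Ej|Nj].
    subst j; move: Hh; case: b; case: b0 Hg => //= Hg Hh; by rewrite Hh in Hg.
  case: b Hh => Hh //.
  case E: ((j, true) \in w) => //; exfalso; apply: Hn; by exists j.
rewrite /vert ffunE eqxx /sgn /=; case: b0 Hg => _ /=; lra.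
Qed.

End Geo.
Arguments sum_eq {R d} c {x}.
Arguments term_eq {R} c {y}.
Arguments sum_bound {R d} c {x}.
Arguments confl_empty {R d w}.
Arguments nconfl_nonempty {R d w}.
Arguments nconfl_vertex {R d w g}.
Arguments cube_bound {R d x}.
Arguments vert_cube {R d}.
Arguments word_faceE {R d}.
Arguments word_face_cong {R d w1 w2}.

Local Open Scope ring_scope.
Local Open Scope classical_set_scope.

Theorem mainTheorem8 (R : realType) (d : nat) (hd : (0 < d)%N) :
  (forall w : seq (gen d), is_face R d (cube R d) (word_face R d w)) /\
  (forall F, is_face R d (cube R d) F -> exists w : seq (gen d), word_face R d w = F) /\
  (forall w1 w2 : seq (gen d),
      word_face R d w1 = word_face R d w2 <-> word_cong (gen d) (cube_rel d) w1 w2).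
Proof.
split.
  move=> w; case: (pselect (confl w)) => Hc.
    exists (fun _ => 0), 1; split.
      by move=> x _; rewrite big1 ?ler01 // => i _; rewrite mul0r.
    rewrite confl_empty //; apply/seteqP; split => x //= [_].
    rewrite big1 => [h|i _]; last by rewrite mul0r.
    by move: h; lra.
  pose c : 'I_d -> R := fun i => if (i, true) \in w then 1 else if (i, false) \in w then -1 else 0.
  exists c, (\sum_i `|c i|); split.
    by move=> x Hx; apply: sum_bound; exact: cube_bound.
  rewrite word_faceE; apply/seteqP; split => x /= [Hx H]; split => //.
    apply/(sum_eq c (cube_bound Hx)) => i; apply/(term_eq _ (cube_bound Hx i)).
    rewrite /c; case Et: ((i, true) \in w).
      by split=> h; [exact: (H _ Et) | exfalso; move: h; lra].
    case Ef: ((i, false) \in w).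
      by split=> h; [exfalso; move: h; lra | exact: (H _ Ef)].
    by split=> h; exfalso; move: h; rewrite ltxx.
  move=> [j b] Hjb /=.
  have := (term_eq _ (cube_bound Hx j)).1 ((sum_eq c (cube_bound Hx)).1 H j).
  rewrite /c; case: b Hjb => Hjb.
    by rewrite Hjb => -[h _]; apply: h; lra.
  case Et: ((j, true) \in w).
    by exfalso; apply: Hc; exists j.
  by rewrite Hjb => -[_ h]; apply: h; lra.
split.
  move=> F [c [b [Hb ->]]].
  pose v := vert R [ffun i => 0 <= c i].
  have Hv : \sum_i c i * v i = \sum_i `|c i|.
    apply: eq_bigr => i _; rewrite /v /vert /sgn ffunE.
    by case: lerP => h; [rewrite mulr1 ger0_norm | rewrite mulrN1 ltr0_norm].
  have Hle : \sum_i `|c i| <= b by rewrite -Hv; apply: Hb; apply: vert_cube.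
  case: (eqVneq b (\sum_i `|c i|)) => Eb.
    exists [seq (i, 0 < c i) | i <- enum 'I_d & c i != 0].
    rewrite word_faceE; apply/seteqP; split => x /= [Hx H]; split => //.
      rewrite Eb; apply/(sum_eq c (cube_bound Hx)) => i.
      apply/(term_eq _ (cube_bound Hx i)).
      have Hi : c i != 0 -> x i = sgn R (0 < c i).
        move=> hc; apply: (H (i, 0 < c i)); apply/mapP; exists i => //.
        by rewrite mem_filter hc mem_enum.
      split=> h.
        by rewrite Hi ?h // lt0r_neq0.
      by rewrite Hi ?(lt_gtF h) // ltr0_neq0.
    move=> [j bb] /mapP[i]; rewrite mem_filter => /andP[hc _] [-> ->] /=.
    rewrite Eb in H.
    have := (term_eq _ (cube_bound Hx i)).1 ((sum_eq c (cube_bound Hx)).1 H i).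
    case: (ltrgtP (c i) 0) hc => hci hc.
    - by case=> _ h; apply: h.
    - by case=> h _; apply: h.
    - by [].
  exists (zw (Ordinal hd)).
  rewrite confl_empty; last by exists (Ordinal hd); rewrite !inE eqxx ?orbT.
  apply/seteqP; split => x //= [Hx H].
  have := sum_bound c (cube_bound Hx); rewrite H => h.
  by move/negP: Eb; apply; rewrite eq_le h Hle.
move=> w1 w2; split; last exact: word_face_cong.
move=> E.
case: (pselect (confl w1)) => [H1|H1]; case: (pselect (confl w2)) => [H2|H2].
- case: H1 => i [Ht Hf]; case: H2 => j [Ht' Hf'].
exact: cgT (cg_confl _ _ Ht Hf) (cgT (cg_zz i j) (cgS (cg_confl _ _ Ht' Hf'))).
- exfalso; have [x Hx] := nconfl_nonempty (R:=R) H2.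
  by move: Hx; rewrite -E confl_empty.
- exfalso; have [x Hx] := nconfl_nonempty (R:=R) H1.
  by move: Hx; rewrite E confl_empty.
- apply: cg_sameset => g Hg; apply/negPn/negP => Hng.
  + have [x [Hx Hne]] := nconfl_vertex (R:=R) H2 Hng.
    by move: Hx; rewrite -E word_faceE => -[_ HP]; apply: Hne; apply: HP.
  + have [x [Hx Hne]] := nconfl_vertex (R:=R) H1 Hng.
    by move: Hx; rewrite E word_faceE => -[_ HP]; apply: Hne; apply: HP.
Qed.
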